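(* Let $S_{d,n}(x_1,\dots,x_n)=\sum_{1\le i_1\le\cdots\le i_d\le n}x_{i_1}\cdots x_{i_d}$ (complete homogeneous symmetric polynomial; $S_{0,n}=1$). For all $n\ge2$ and $d\ge1$, in the field of rational functions $\mathbb Q(x_1,\dots,x_n)$, $$S_{d,n}=\sum\frac{(-1)^{\alpha(i_2,\dots,i_n)+n}}{(x_2-x_{i_2})(x_3-x_{i_3})\cdots(x_n-x_{i_n})}\,(x_n^{d+n-1}-x_{i_n}^{d+n-1}),$$ the sum running over the $2^{n-2}$ tuples $(i_2,\dots,i_n)$ with $i_2=1$ and $i_{j+1}\in\{j,i_j\}$ for $2\le j\le n-1$, where $\alpha(i_2,\dots,i_n)$ is the number of $j$ with $2\le j\le n-1$ and $i_{j+1}\ne i_j$. *)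

(* Defs.v *)
From HB Require Import structures.
From mathcomp Require Import all_boot all_order all_algebra.
Set Implicit Arguments. Unset Strict Implicit. Unset Printing Implicit Defensive.
Import Order.TTheory GRing.Theory Num.Theory.
Local Open Scope ring_scope.

(* Variables are x 1, ..., x n (1-based), x : nat -> rat. *)

Definition S_dn (d n : nat) (x : nat -> rat) : rat :=
  \sum_(t : d.-tuple 'I_n | sorted leq (map val t)) \prod_(i <- t) x (val i).+1.

(* A tuple (i_2, ..., i_n) is encoded as f : 'I_(n.-1) -> 'I_n.+1 with
   f k = i_{k+2} (values are the 1-based indices).
   Admissibility: i_2 = 1 and i_{j+1} in {j, i_j} for 2 <= j <= n-1,
   i.e. for k.+1 < n.-1 : f (k+1) = k+2 or f (k+1) = f k. *)
Definition fval (n : nat) (f : {ffun 'I_(n.-1) -> 'I_n.+1}) (k : nat) : nat :=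
  match ltnP k n.-1 with
  | LtnNotGeq Hk => val (f (Ordinal Hk))
  | _ => 0%N
  end.

Definition admissible (n : nat) (f : {ffun 'I_(n.-1) -> 'I_n.+1}) : bool :=
  (fval f 0 == 1%N) &&
  [forall k : 'I_(n.-1), (k.+1 < n.-1)%N ==>
      ((fval f k.+1 == k.+2) || (fval f k.+1 == fval f k))].

Definition alpha (n : nat) (f : {ffun 'I_(n.-1) -> 'I_n.+1}) : nat :=
  #|[pred k : 'I_(n.-1) | (k.+1 < n.-1)%N && (fval f k.+1 != fval f k)]|.

Definition hrhs (d n : nat) (x : nat -> rat) : rat :=
  \sum_(f : {ffun 'I_(n.-1) -> 'I_n.+1} | admissible f)
    ((-1) ^+ (alpha f + n) /
       (\prod_(k < n.-1) (x k.+2 - x (fval f k))) *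
     (x n ^+ (d + n - 1) - x (fval f (n.-2)) ^+ (d + n - 1))).

(* Main.v *)
Require Import Defs.
From HB Require Import structures.
From mathcomp Require Import all_boot all_order all_algebra.
From mathcomp Require Import ring.
Set Implicit Arguments. Unset Strict Implicit. Unset Printing Implicit Defensive.
Import Order.TTheory GRing.Theory Num.Theory.
Local Open Scope ring_scope.
Definition Pw (p : nat) : rat -> rat := fun y => y ^+ p.

Fixpoint DD (x : nat -> rat) (k : nat) (phi : rat -> rat) {struct k} : rat :=
  match k with
  | 0 => phi (x 1%N)
  | k'.+1 => DD x k' (fun y => (phi (x k'.+2) - phi y) / (x k'.+2 - y))
  end.

Lemma DD_ext x k : forall phi psi,
  (forall i, (1 <= i)%N -> (i <= k.+1)%N -> phi (x i) = psi (x i)) ->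
  DD x k phi = DD x k psi.
Proof.
elim: k => [|k IH] phi psi H /=; first by apply: H.
apply: IH => i h1 h2; rewrite !H //; exact: leqW.
Qed.

Lemma DD_extf x k phi psi : (forall y, phi y = psi y) -> DD x k phi = DD x k psi.
Proof. by move=> H; apply: DD_ext => i _ _; apply: H. Qed.

Lemma DD_lin x k : forall a b phi psi,
  DD x k (fun y => a * phi y + b * psi y) = a * DD x k phi + b * DD x k psi.
Proof.
elim: k => [|k IH] a b phi psi //=.
rewrite -IH; apply: DD_extf => y.
rewrite !mulrA -mulrDl; congr (_ * _); ring.
Qed.

Lemma DD0 x k : DD x k (fun _ => 0) = 0.
Proof.
elim: k => [|k IH] //=.
rewrite -[RHS]IH; apply: DD_extf => y; by rewrite subrr mul0r.
Qed.

Lemma DD_pow_rec x k p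
  (hk : forall i, (1 <= i)%N -> (i <= k.+1)%N -> x i != x k.+2) :
  DD x k.+1 (Pw p.+1) = DD x k (Pw p) + x k.+2 * DD x k.+1 (Pw p).
Proof.
rewrite /=.
transitivity (DD x k (fun y => 1 * Pw p y + x k.+2 *
   ((Pw p (x k.+2) - Pw p y) / (x k.+2 - y)))); last by rewrite DD_lin mul1r.
apply: DD_ext => i h1 h2.
have hne : x k.+2 - x i != 0 by rewrite subr_eq0 eq_sym hk.
rewrite /Pw !exprS; field.
exact: hne.
Qed.

Fixpoint L (e j : nat) {struct j} : seq (seq nat) :=
  match j with
  | 0 => if e is 0 then [:: [::]] else [::]
  | j'.+1 => (fix Le (e : nat) : seq (seq nat) :=
      match e with
      | 0 => [:: [::]]
      | e'.+1 => L e j' ++ map (fun s => rcons s j') (Le e')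
      end) e
  end.

Lemma L0 j : L 0 j = [:: [::]]. Proof. by case: j. Qed.
Lemma LS e j : L e.+1 j.+1 = L e.+1 j ++ map (fun s => rcons s j) (L e j.+1).
Proof. by []. Qed.
Lemma L_0S e : L e.+1 0 = [::]. Proof. by []. Qed.

Definition G (x : nat -> rat) e j := \sum_(s <- L e j) \prod_(i <- s) x i.+1.

Lemma G0 x j : G x 0 j = 1.
Proof. by rewrite /G L0 big_seq1 big_nil. Qed.

Lemma GS x e j : G x e.+1 j.+1 = G x e.+1 j + x j.+1 * G x e j.+1.
Proof.
rewrite /G LS big_cat big_map /=; congr (_ + _).
rewrite mulr_sumr; apply: eq_bigr => s _; by rewrite big_rcons mulrC.
Qed.

Lemma G_0S x e : G x e.+1 0 = 0.
Proof. by rewrite /G L_0S big_nil. Qed.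

Lemma G1 x e : G x e 1 = x 1%N ^+ e.
Proof.
elim: e => [|e IH]; first by rewrite G0 expr0.
by rewrite GS G_0S add0r IH exprS.
Qed.


Lemma DD_pow_small x n
  (hx : forall i j : nat, (1 <= i)%N -> (i < j)%N -> (j <= n)%N -> x i != x j) :
  forall k p, (k.+1 <= n)%N -> (p < k)%N -> DD x k (Pw p) = 0.
Proof.
elim=> [|k IH] p // hkn.
have hk : forall i, (1 <= i)%N -> (i <= k.+1)%N -> x i != x k.+2.
  by move=> i h1 h2; apply: hx.
elim: p => [|p IHp] hp.
  rewrite /= -[RHS](DD0 x k); apply: DD_extf => y; by rewrite /Pw !expr0 subrr mul0r.
rewrite DD_pow_rec // IH ?IHp //; first by rewrite mulr0 addr0.
  exact: ltnW.
exact: ltnW.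
Qed.

Lemma DD_pow x n
  (hx : forall i j : nat, (1 <= i)%N -> (i < j)%N -> (j <= n)%N -> x i != x j) :
  forall k e, (k.+1 <= n)%N -> DD x k (Pw (e + k)) = G x e k.+1.
Proof.
elim=> [|k IH] e hkn; first by rewrite addn0 G1.
have hk : forall i, (1 <= i)%N -> (i <= k.+1)%N -> x i != x k.+2.
  by move=> i h1 h2; apply: hx.
elim: e => [|e IHe].
  rewrite add0n DD_pow_rec // -[k]add0n IH; last exact: ltnW.
  rewrite add0n (DD_pow_small hx) // mulr0 addr0 !G0 //.
rewrite addSn DD_pow_rec // -addSnnS IH; last exact: ltnW.
rewrite addSnnS.
by rewrite IHe [RHS]GS.
Qed.
Lemma path_rcons_leq (t : seq nat) a : forall b,
  path leq b (rcons t a) = [&& path leq b t, (b <= a)%N & all (fun y => y <= a)%N t].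
Proof.
elim: t => [|c t IH] b /=; first by rewrite !andbT.
rewrite IH; apply/idP/idP.
  case/and4P=> h1 h2 h3 h4; rewrite h1 h2 h3 h4 /= andbT; exact: leq_trans h3.
by case/and3P => /andP[h1 h2] h3 /andP[h4 h5]; rewrite h1 h2 h4 h5.
Qed.

Lemma sorted_rcons_leq (t : seq nat) a :
  sorted leq (rcons t a) = sorted leq t && all (fun y => y <= a)%N t.
Proof.
case: t => [|b t] //=; rewrite path_rcons_leq.
by rewrite andbA.
Qed.

Lemma memL e j s :
  (s \in L e j) = [&& size s == e, all (fun a => a < j)%N s & sorted leq s].
Proof.
elim: j e s => [|j IHj] e s.
  case: e => [|e]; case: s => [|a s] //=.
  by rewrite andbF.
elim: e s => [|e IHe] s.
  by rewrite L0; case: s => [|a s].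
rewrite LS mem_cat IHj; apply/idP/idP.
  case/orP => [/and3P[h1 h2 h3]|/mapP[t ht ->]].
    rewrite h1 h3 andbT /=; apply: sub_all h2 => y /= hy; exact: ltnW.
  move: ht; rewrite IHe => /and3P[h1 h2 h3].
  rewrite size_rcons eqSS h1 all_rcons ltnSn h2 sorted_rcons_leq h3 /=.
  by apply: sub_all h2.
case/lastP: s => [|t a] // /and3P[h1 h2 h3].
move: h2; rewrite all_rcons => /andP[ha h2].
have /andP[h3' h4] : sorted leq t && all (fun y => y <= a)%N t by rewrite -sorted_rcons_leq.
case: (ltngtP a j) => haj.
- apply/orP; left; rewrite h1 h3 andbT all_rcons haj /=.
  by apply/allP => y hy; apply: leq_ltn_trans haj; apply: (allP h4).
- by rewrite ltnS leqNgt haj in ha.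
- apply/orP; right; apply/mapP; exists t; last by rewrite haj.
  by rewrite IHe h2 h3' !andbT -eqSS -(size_rcons t a).
Qed.

Lemma uniqL e j : uniq (L e j).
Proof.
elim: j e => [|j IHj] e; first by case: e.
elim: e => [|e IHe]; first by rewrite L0.
rewrite LS cat_uniq IHj map_inj_uniq ?IHe ?andbT /=; last first.
  by move=> s1 s2 /rcons_inj [].
apply/hasPn => s /mapP[t _ ->]; rewrite memL all_rcons ltnn /=.
by rewrite andbF.
Qed.

Lemma S_G d j x : S_dn d j.+1 x = G x d j.+1.
Proof.
rewrite /S_dn /G.
pose P := (fun t : d.-tuple 'I_j.+1 => sorted leq (map val t)).
pose g := (fun t : d.-tuple 'I_j.+1 => map val (tval t)).
transitivity (\sum_(s <- map g (filter P (index_enum _))) \prod_(i <- s) x i.+1).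
  rewrite big_map big_filter; apply: eq_bigr => t _; by rewrite big_map.
apply: perm_big; apply: uniq_perm.
- rewrite map_inj_uniq ?filter_uniq ?index_enum_uniq //.
  move=> t1 t2 /= H; apply: val_inj; exact: (inj_map val_inj H).
- exact: uniqL.
move=> s; rewrite memL; apply/idP/idP.
  case/mapP => t; rewrite mem_filter => /andP[hP _] ->.
  rewrite /g size_map size_tuple eqxx.
  rewrite -/(P t) hP andbT /=.
  by apply/allP => a /mapP[i _ ->]; exact: ltn_ord.
case/and3P => h1 h2 h3.
have hu : size (map (fun a => (inord a : 'I_j.+1)) s) == d by rewrite size_map.
have hv : map val (Tuple hu) = s.
  rewrite /= -map_comp; apply: map_id_in => a ha /=; apply: inordK; exact: (allP h2).
apply/mapP; exists (Tuple hu); last by rewrite /g hv.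
by rewrite mem_filter mem_index_enum andbT /P hv.
Qed.
Fixpoint T (m : nat) : seq (seq nat) :=
  match m with
  | 0 => [:: [:: 1%N]]
  | m'.+1 => map (fun s => rcons s (last 0%N s)) (T m') ++
             map (fun s => rcons s m'.+2) (T m')
  end.

Lemma T_inv m s : s \in T m -> (size s == m.+1) && all (fun a => a <= m.+1)%N s.
Proof.
elim: m s => [|m IH] s /=; first by rewrite inE => /eqP ->.
rewrite mem_cat => /orP[] /mapP[t ht ->]; have /andP[h1 h2] := IH t ht;
  rewrite size_rcons eqSS h1 all_rcons /=.
- have hl : (last 0%N t <= m.+1)%N.
    have := mem_last 0%N t; rewrite inE => /orP[/eqP -> //|]; exact: (allP h2).
  rewrite ltnW ?ltnS //=; apply: sub_all h2 => y /= hy; exact: leqW.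
- rewrite leqnn /=; apply: sub_all h2 => y /= hy; exact: leqW.
Qed.

Lemma T_last m s : s \in T m -> (last 0%N s <= m.+1)%N.
Proof.
move/T_inv=> /andP[_ h2].
have := mem_last 0%N s; rewrite inE => /orP[/eqP -> //|]; exact: (allP h2).
Qed.

Definition admseq (m : nat) (s : seq nat) : bool :=
  [&& size s == m.+1, nth 0%N s 0 == 1%N &
      all (fun k => (nth 0%N s k.+1 == k.+2) || (nth 0%N s k.+1 == nth 0%N s k))
          (iota 0 m)].

Lemma adm_rcons m t a : size t = m.+1 ->
  admseq m.+1 (rcons t a) = admseq m t && ((a == m.+2) || (a == last 0%N t)).
Proof.
move=> ht.
have h0 : nth 0%N (rcons t a) 0 = nth 0%N t 0 by rewrite nth_rcons ht.
have hall : all (fun k => (nth 0%N (rcons t a) k.+1 == k.+2)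
    || (nth 0%N (rcons t a) k.+1 == nth 0%N (rcons t a) k)) (iota 0 m.+1) =
  all (fun k => (nth 0%N t k.+1 == k.+2) || (nth 0%N t k.+1 == nth 0%N t k)) (iota 0 m)
  && ((a == m.+2) || (a == last 0%N t)).
  rewrite -addn1 iotaD all_cat add0n addn1; congr andb.
    apply: eq_in_all => k; rewrite mem_iota add0n => /andP[_ hk].
    by rewrite !nth_rcons ht ltnS hk ltnS ltnW.
  rewrite /= !nth_rcons ht ltnn eqxx ltnSn andbT.
  by rewrite -nth_last ht.
rewrite /admseq size_rcons ht eqxx h0 hall /=.
by rewrite eqxx /= andbA.
Qed.

Lemma memT m s : (s \in T m) = admseq m s.
Proof.
elim: m s => [|m IH] s.
  rewrite /= inE /admseq /=; case: s => [|a [|b s]] //=.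
  by rewrite eqseq_cons /= andbF.
rewrite /= mem_cat; apply/idP/idP.
  case/orP => /mapP[t ht ->]; have := ht; rewrite IH => hadm;
    have /andP[/eqP hs _] := T_inv ht;
    by rewrite adm_rcons // hadm eqxx ?orbT.
case/lastP: s => [|t a]; first by rewrite /admseq.
move=> H; have hs : size t = m.+1.
  by move: H; rewrite /admseq size_rcons => /andP[/eqP [->] _].
move: H; rewrite adm_rcons // -IH => /andP[ht /orP[/eqP ->|/eqP ->]].
  by apply/orP; right; apply: map_f.
by apply/orP; left; apply: map_f.
Qed.

Lemma uniqT m : uniq (T m).
Proof.
elim: m => [|m IH] //=.
rewrite cat_uniq !map_inj_uniq ?IH ?andbT //=; last first.
- by move=> s1 s2 /rcons_inj [].
- by move=> s1 s2 /rcons_inj [].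
apply/hasPn => s /mapP[t ht ->]; apply/negP => /mapP[t' ht' /rcons_inj [_ e]].
by have := T_last ht'; rewrite -e ltnn.
Qed.

Definition alph (s : seq nat) : nat :=
  \sum_(j < (size s).-1) (nth 0%N s j.+1 != nth 0%N s j).
Definition den (x : nat -> rat) (s : seq nat) : rat :=
  \prod_(j < size s) (x j.+2 - x (nth 0%N s j)).
Definition term (x : nat -> rat) (Psi : nat -> rat) (s : seq nat) : rat :=
  (-1) ^+ alph s / den x s * Psi (last 0%N s).
Definition A x m Psi := \sum_(s <- T m) term x Psi s.

Lemma alph_rcons t a : (0 < size t)%N ->
  alph (rcons t a) = (alph t + (a != last 0%N t))%N.
Proof.
rewrite /alph size_rcons /=; case ht: (size t) => [//|k] _ /=.
rewrite big_ord_recr /= !nth_rcons ht ltnn eqxx ltnSn -nth_last ht /=.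
congr (_ + _)%N; apply: eq_bigr => j _ /=.
by rewrite !nth_rcons ht ltnS (ltn_ord j) ltnS (ltnW (ltn_ord j)).
Qed.

Lemma den_rcons x t a : den x (rcons t a) = den x t * (x (size t).+2 - x a).
Proof.
rewrite /den size_rcons big_ord_recr /= nth_rcons ltnn eqxx; congr (_ * _).
by apply: eq_bigr => j _ /=; rewrite nth_rcons (ltn_ord j).
Qed.

Lemma A_ext x m Psi Psi' : (forall i, Psi i = Psi' i) -> A x m Psi = A x m Psi'.
Proof. by move=> H; apply: eq_bigr => s _; rewrite /term H. Qed.

Lemma A_opp x m Psi : A x m (fun i => - Psi i) = - A x m Psi.
Proof. by rewrite /A -sumrN; apply: eq_bigr => s _; rewrite /term mulrN. Qed.

Lemma A_S x m Psi : A x m.+1 Psi =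
  A x m (fun i => Psi i / (x m.+3 - x i) - Psi m.+2 / (x m.+3 - x m.+2)).
Proof.
rewrite /A [T m.+1]/= big_cat !big_map.
rewrite [RHS](@eq_big_seq _ _ _ _ _ _ (fun s => term x Psi (rcons s (last 0%N s))
   + term x Psi (rcons s m.+2))); first by rewrite big_split.
move=> s hs.
have /andP[/eqP hsz _] := T_inv hs.
have hl := T_last hs.
have hne : (m.+2 != last 0%N s) by apply/eqP => e; rewrite -e ltnn in hl.
rewrite /term !alph_rcons ?hsz // !den_rcons !last_rcons hsz eqxx hne addn0 addn1.
rewrite exprS !invfM; ring.
Qed.

Lemma A_DD x : forall m phi,
  A x m (fun i => phi (x m.+2) - phi (x i)) = (-1) ^+ m * DD x m.+1 phi.
Proof.
elim=> [|m IH] phi.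
  rewrite /A /= big_seq1 /term /alph /den /= big_ord0 big_ord1 /=.
  by rewrite expr0 div1r mulrC mul1r.
rewrite A_S.
pose psi := fun y => (phi (x m.+3) - phi y) / (x m.+3 - y).
transitivity (A x m (fun i => - (psi (x m.+2) - psi (x i)))).
  by apply: A_ext => i; rewrite opprB.
by rewrite A_opp IH exprS mulN1r mulNr.
Qed.
Definition fseq m (f : {ffun 'I_m.+1 -> 'I_m.+3}) : seq nat :=
  map (@fval m.+2 f) (iota 0 m.+1).

Lemma fval_ord m (f : {ffun 'I_m.+1 -> 'I_m.+3}) (k : 'I_m.+1) :
  @fval m.+2 f k = f k.
Proof.
rewrite /fval; case: ltnP => [h|h]; first by congr (nat_of_ord (f _)); apply: val_inj.
by have := ltn_ord k; rewrite ltnNge h.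
Qed.

Lemma size_fseq m f : size (@fseq m f) = m.+1.
Proof. by rewrite size_map size_iota. Qed.

Lemma nth_fseq m f k : (k < m.+1)%N -> nth 0%N (@fseq m f) k = @fval m.+2 f k.
Proof. by move=> hk; rewrite (nth_map 0%N) ?size_iota // nth_iota. Qed.

Lemma fseq_inj m : injective (@fseq m).
Proof.
move=> f g H; apply/ffunP => k; apply: val_inj => /=.
by rewrite -(fval_ord f) -(fval_ord g) -!nth_fseq // H.
Qed.

Lemma alpha_alph m (f : {ffun 'I_m.+1 -> 'I_m.+3}) : @alpha m.+2 f = alph (fseq f).
Proof.
rewrite /alpha /alph size_fseq.
under eq_bigr => j _ do rewrite (@nth_fseq m f j.+1 (ltn_ord j)) (@nth_fseq m f j (ltnW (ltn_ord j))).
rewrite -sum1_card big_mkcond big_ord_recr.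
rewrite inE /= ltnn /= addn0; apply: eq_bigr => j _.
rewrite inE /= ltnS (ltn_ord j) /=.
by case: ifP.
Qed.

Lemma den_fseq x m (f : {ffun 'I_m.+1 -> 'I_m.+3}) :
  den x (fseq f) = \prod_(k < m.+1) (x k.+2 - x (@fval m.+2 f k)).
Proof.
rewrite /den size_fseq.
by under eq_bigr => j _ do rewrite (@nth_fseq m f j (ltn_ord j)).
Qed.

Lemma last_fseq m (f : {ffun 'I_m.+1 -> 'I_m.+3}) : last 0%N (fseq f) = @fval m.+2 f m.
Proof. by rewrite -nth_last size_fseq nth_fseq. Qed.

Lemma mem_fseq m s :
  (s \in map (@fseq m) (filter (@admissible m.+2) (index_enum _))) = admseq m s.
Proof.
apply/idP/idP.
  case/mapP => f; rewrite mem_filter => /andP[hadm _] ->.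
  move/andP: hadm => [h0 hall].
  rewrite /admseq size_fseq eqxx nth_fseq // h0 !andTb.
  apply/allP => k; rewrite mem_iota add0n => /andP[_ hk].
  have hk1 : (k < m.+1)%N by apply: ltnW.
  rewrite (@nth_fseq m f k.+1 hk) (@nth_fseq m f k hk1).
  have := forallP hall (Ordinal hk1); rewrite /= ltnS hk /=.
  done.
move=> H; have hT : s \in T m by rewrite memT.
have /andP[/eqP hs hb] := T_inv hT.
pose f := [ffun k : 'I_m.+1 => (inord (nth 0%N s k) : 'I_m.+3)].
have hf : forall k, (k < m.+1)%N -> @fval m.+2 f k = nth 0%N s k.
  move=> k hk; rewrite -[k]/(nat_of_ord (Ordinal hk)) fval_ord ffunE inordK //=.
  apply: leq_ltn_trans (allP hb _ (mem_nth 0%N _)) _; first by rewrite hs.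
  by apply: leqW.
have hfs : fseq f = s.
  apply: (@eq_from_nth _ 0%N); first by rewrite size_fseq hs.
  by move=> i; rewrite size_fseq => hi; rewrite nth_fseq // hf.
apply/mapP; exists f => //.
rewrite mem_filter mem_index_enum andbT.
move: H; rewrite /admseq => /and3P[_ h0 hall].
rewrite /admissible hf // h0 /=.
apply/forallP => k; apply/implyP => hk.
rewrite !hf //; apply: (allP hall); rewrite mem_iota add0n /=.
by rewrite -ltnS.
Qed.

Lemma hrhs_A d m x : hrhs d m.+2 x = (-1) ^+ (m.+2) *
  A x m (fun i => x m.+2 ^+ (d + m.+2 - 1) - x i ^+ (d + m.+2 - 1)).
Proof.
set M := (d + m.+2 - 1)%N.
set Psi := (fun i => _).
rewrite /hrhs /A mulr_sumr.
transitivity (\sum_(s <- map (@fseq m) (filter (@admissible m.+2) (index_enum _)))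
   (-1) ^+ (m.+2) * term x Psi s).
  rewrite big_map big_filter; apply: eq_bigr => f _.
  rewrite /term alpha_alph den_fseq last_fseq exprD /Psi /=.
  ring.
apply: perm_big; apply: uniq_perm.
- by rewrite map_inj_uniq ?filter_uniq ?index_enum_uniq //; apply: fseq_inj.
- exact: uniqT.
by move=> s; rewrite mem_fseq memT.
Qed.

Theorem mainTheorem3 (n d : nat) (hn : (2 <= n)%N) (hd : (1 <= d)%N)
  (x : nat -> rat)
  (hx : forall i j : nat, (1 <= i)%N -> (i < j)%N -> (j <= n)%N -> x i != x j) :
  S_dn d n x = hrhs d n x.
Proof.
case: n hn hx => [|[|m]] // hn hx.
rewrite S_G hrhs_A.
have hM : (d + m.+2 - 1)%N = (d + m.+1)%N by rewrite addnS subn1.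
rewrite hM -(DD_pow hx) //.
rewrite (@A_ext x m _ (fun i => Pw (d + m.+1) (x m.+2) - Pw (d + m.+1) (x i))) //.
rewrite A_DD mulrA -exprD.
rewrite exprD !exprS !mulN1r opprK -exprMn mulN1r opprK expr1n mul1r.
done.
Qed.
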